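(* Let $n\ge 3$ and let $g$ be a prime power such that $g\ge n$ if $g$ is even and $g\ge n+1$ if $g$ is odd. Then there exists a $\mathrm{TOC}_{g+1}(n,4,3)$.
   Context: $\mathcal{H}_q(n,w)$ is the set of all words of length $n$ over $\mathbb{Z}_q$ with exactly $w$ nonzero entries, with the Hamming distance. An $(n,d,w)_q$-code is a nonempty subset of $\mathcal{H}_q(n,w)$ in which any two distinct words have Hamming distance at least $d$; $A_q(n,d,w)$ is the maximum size of such a code and a code of this size is optimal. A $\mathrm{TOC}_q(n,d,w)$ is a partition of $\mathcal{H}_q(n,w)$ into mutually disjoint optimal $(n,d,w)_q$-codes. *)

(* Defs.v *)
From mathcomp Require Import all_boot.
Set Implicit Arguments. Unset Strict Implicit. Unset Printing Implicit Defensive.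

(* Words of length n over Z_q, represented as finite functions 'I_n -> 'I_q
   (the ordinal 'I_q is the underlying set {0,...,q-1} of Z_q; only the zero
   element matters here). *)
Definition word (q n : nat) := {ffun 'I_n -> 'I_q}.

Definition wt (q n : nat) (x : word q n) : nat := #|[set i | val (x i) != 0]|.

Definition hdist (q n : nat) (x y : word q n) : nat := #|[set i | x i != y i]|.

Definition Hqnw (q n w : nat) : {set word q n} := [set x | wt x == w].

Definition is_code (q n d w : nat) (C : {set word q n}) : bool :=
  [&& C != set0, C \subset Hqnw q n w &
      [forall x in C, forall y in C, (x != y) ==> (d <= hdist x y)]].

Definition Aq (q n d w : nat) : nat :=
  \max_(C : {set word q n} | is_code d w C) #|C|.

Definition optimal_code (q n d w : nat) (C : {set word q n}) : bool :=
  is_code d w C && (#|C| == Aq q n d w).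

Definition is_TOC (q n d w : nat) (P : {set {set word q n}}) : bool :=
  partition P (Hqnw q n w) && [forall C in P, optimal_code d w C].

Definition TOC_exists (q n d w : nat) : Prop :=
  exists P : {set {set word q n}}, is_TOC d w P.

Definition prime_power (g : nat) : Prop :=
  exists p k : nat, prime p /\ 0 < k /\ g = p ^ k.

(* Main.v *)
Require Import Defs.
From mathcomp Require Import all_boot all_algebra finfield.
From mathcomp Require Import ring zify.
Import GRing.Theory.
Set Implicit Arguments. Unset Strict Implicit.

Section Construction.
Variables (F : finFieldType) (n g : nat).
Hypothesis cardF : #|F| = g.
Variable lam : 'I_n -> F.
Hypothesis lam_inj : injective lam.

Definition enc (f : F) : 'I_g.+1 := inord (enum_rank f).+1.

Lemma enc_val f : val (enc f) = (enum_rank f).+1.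
Proof. rewrite /enc /= inordK // ltnS -cardF; exact: ltn_ord. Qed.

Lemma enc_inj : injective enc.
Proof. move=> f f' /(congr1 val); rewrite !enc_val => -[] /val_inj; exact: enum_rank_inj. Qed.

Lemma enc_surj (v : 'I_g.+1) : val v != 0 -> exists f, enc f = v.
Proof.
move=> v0; have h : v.-1 < #|F|.
  by rewrite cardF -ltnS prednK ?lt0n // ltn_ord.
exists (enum_val (Ordinal h)); apply: val_inj; rewrite enc_val enum_valK /=.
by rewrite prednK ?lt0n.
Qed.

Local Open Scope ring_scope.

Definition sT (T : {set 'I_n}) : F := \sum_(i in T) lam i.
Definition val3 (c : F * F * F) (t : F) : F := c.1.1 + c.1.2 * t + c.2 * t ^+ 2.

Definition mkw (T : {set 'I_n}) (c : F * F * F) : word g.+1 n :=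
  [ffun i => if i \in T then enc (val3 c (lam i) + sT T - lam i) else ord0].

Definition supp (x : word g.+1 n) := [set i | val (x i) != 0%N].

Lemma supp_mkw T c : supp (mkw T c) = T.
Proof. by apply/setP => i; rewrite !inE ffunE; case: (i \in T); rewrite ?enc_val. Qed.

Lemma val3_uniq (x y z : F) c c' : x != y -> x != z -> y != z ->
  val3 c x = val3 c' x -> val3 c y = val3 c' y -> val3 c z = val3 c' z -> c = c'.
Proof.
case: c => [[a0 a1] a2]; case: c' => [[b0 b1] b2]; rewrite /val3 /=.
move=> xy xz yz /eqP ex /eqP ey /eqP ez.
rewrite -subr_eq0 in ex; rewrite -subr_eq0 in ey; rewrite -subr_eq0 in ez.
set d0 := a0 - b0; set d1 := a1 - b1; set d2 := a2 - b2.
have E t : a0 + a1 * t + a2 * t ^+ 2 - (b0 + b1 * t + b2 * t ^+ 2) = d0 + d1 * t + d2 * t ^+ 2.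
  rewrite /d0 /d1 /d2; ring.
rewrite E in ex; rewrite E in ey; rewrite E in ez.
have exy : (x - y) * (d1 + d2 * (x + y)) = 0.
  have -> : (x - y) * (d1 + d2 * (x + y)) = (d0 + d1 * x + d2 * x ^+ 2) - (d0 + d1 * y + d2 * y ^+ 2) by ring.
  by rewrite (eqP ex) (eqP ey) subrr.
have exz : (x - z) * (d1 + d2 * (x + z)) = 0.
  have -> : (x - z) * (d1 + d2 * (x + z)) = (d0 + d1 * x + d2 * x ^+ 2) - (d0 + d1 * z + d2 * z ^+ 2) by ring.
  by rewrite (eqP ex) (eqP ez) subrr.
move/eqP: exy; rewrite mulf_eq0 subr_eq0 (negbTE xy) /= => /eqP h1.
move/eqP: exz; rewrite mulf_eq0 subr_eq0 (negbTE xz) /= => /eqP h2.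
have : (y - z) * d2 = 0.
  have -> : (y - z) * d2 = (d1 + d2 * (x + y)) - (d1 + d2 * (x + z)) by ring.
  by rewrite h1 h2 subrr.
move/eqP; rewrite mulf_eq0 subr_eq0 (negbTE yz) /= => /eqP d20.
have d10 : d1 = 0 by move: h1; rewrite d20 mul0r addr0.
have d00 : d0 = 0 by move/eqP: ex; rewrite d20 d10 !mul0r !addr0.
move/eqP: d00; rewrite subr_eq0 => /eqP <-.
move/eqP: d10; rewrite subr_eq0 => /eqP <-.
by move/eqP: d20; rewrite subr_eq0 => /eqP <-.
Qed.


Lemma cards3P (T : {set 'I_n}) : #|T| = 3%N ->
  exists a b d, [/\ a != b, a != d, b != d & T = [set a; b; d]].
Proof.
move=> h3; have /set0Pn [a aT] : T != set0 by rewrite -card_gt0 h3.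
have : #|T :\ a| == 2%N by rewrite (cardsD1 a) aT /= add1n in h3; case: h3 => ->.
case/cards2P => b [d [bd Te]].
have : b \in T :\ a by rewrite Te !inE eqxx.
have : d \in T :\ a by rewrite Te !inE eqxx orbT.
rewrite !inE => /andP [da _] /andP [ba _].
exists a, b, d; split; [by rewrite eq_sym | by rewrite eq_sym | by [] | ].
rewrite -{1}(setD1K aT) Te; apply/setP => i; rewrite !inE; by rewrite orbA.
Qed.

Lemma mkw_at (T : {set 'I_n}) c (i : 'I_n) : i \in T -> mkw T c i = enc (val3 c (lam i) + sT T - lam i).
Proof. by move=> iT; rewrite ffunE iT. Qed.

Lemma mkw_out (T : {set 'I_n}) c (i : 'I_n) : i \notin T -> mkw T c i = ord0.
Proof. by move=> iT; rewrite ffunE (negbTE iT). Qed.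

Lemma mkw_inj (T T' : {set 'I_n}) c c' : #|T| = 3%N -> mkw T c = mkw T' c' -> T = T' /\ c = c'.
Proof.
move=> h3 e.
have TT' : T = T' by rewrite -(supp_mkw T c) e supp_mkw.
split=> //; subst T'.
have ev i : i \in T -> val3 c (lam i) = val3 c' (lam i).
  move=> iT; move: (congr1 (fun x : word g.+1 n => x i) e) => /=.
  by rewrite !mkw_at // => /enc_inj /addIr /addIr.
have [a [b [d [ab ad bd Te]]]] := cards3P h3.
apply: (@val3_uniq (lam a) (lam b) (lam d)); rewrite ?(inj_eq lam_inj) //;
  apply: ev; rewrite Te !inE eqxx ?orbT //.
Qed.


Lemma mkw_dist (T T' : {set 'I_n}) c : #|T| = 3%N -> #|T'| = 3%N -> T != T' ->
  (4 <= hdist (mkw T c) (mkw T' c))%N.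
Proof.
move=> h3 h3' nT.
rewrite /hdist; set D := [set i | _].
have dT i : i \in T -> i \notin T' -> i \in D.
  move=> iT iT'; rewrite inE mkw_at // mkw_out //.
  by apply/eqP => /(congr1 val); rewrite enc_val.
have dT' i : i \in T' -> i \notin T -> i \in D.
  move=> iT iT'; rewrite inE (mkw_out _ iT') (mkw_at _ iT).
  by apply/eqP => /(congr1 val); rewrite enc_val.
have kle : (#|T :&: T'| <= 2)%N.
  rewrite leqNgt; apply/negP => hk.
  have e1 : T :&: T' == T by rewrite eqEcard subsetIl h3.
  have e2 : T :&: T' == T' by rewrite eqEcard subsetIr h3'.
  by move: nT; rewrite -(eqP e1) (eqP e2) eqxx.
have cD1 : #|T :\: T'| = (3 - #|T :&: T'|)%N by rewrite cardsD h3.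
have cD2 : #|T' :\: T| = (3 - #|T :&: T'|)%N by rewrite cardsD h3' setIC.
have cU : (#|T :|: T'| + #|T :&: T'| = #|T| + #|T'|)%N := cardsUI T T'.
case: (eqVneq (sT T) (sT T')) => es; last first.
  have sub : T :|: T' \subset D.
    apply/subsetP => i; rewrite inE => /orP [iT|iT'].
      case iT' : (i \in T'); last by apply: dT; rewrite ?iT'.
      rewrite inE !mkw_at //; apply/eqP => /enc_inj /addIr /addrI e.
      by rewrite e eqxx in es.
    case iT : (i \in T); last by apply: dT'; rewrite ?iT.
    rewrite inE !mkw_at //; apply/eqP => /enc_inj /addIr /addrI e.
    by rewrite e eqxx in es.
  have hD : (#|T :|: T'| <= #|D|)%N := subset_leq_card sub.
  lia.
have k1 : (#|T :&: T'| <= 1)%N.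
  rewrite leqNgt; apply/negP => hk.
  have /cards1P [a ea] : #|T :\: T'| == 1%N by rewrite cD1; apply/eqP; lia.
  have /cards1P [b eb] : #|T' :\: T| == 1%N by rewrite cD2; apply/eqP; lia.
  have s1 : sT T = sT (T :&: T') + lam a by rewrite /sT (big_setID T') ea big_set1.
  have s2 : sT T' = sT (T :&: T') + lam b by rewrite /sT (big_setID T) eb big_set1 setIC.
  have : lam a = lam b by apply: (@addrI _ (sT (T :&: T'))); rewrite -s1 -s2.
  move/lam_inj => eab.
  have : a \in T :\: T' by rewrite ea inE.
  have : b \in T' :\: T by rewrite eb inE.
  rewrite !inE eab => /andP [_ hb] /andP [hb' _].
  by rewrite hb in hb'.
have sub : (T :\: T') :|: (T' :\: T) \subset D.
  by apply/subsetP => i /setUP [/setDP [iT iT'] | /setDP [iT' iT]];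
  [apply: dT | apply: dT'].
have e0 : (T :\: T') :&: (T' :\: T) = set0.
  by apply/setP => i; rewrite !inE; case: (i \in T); case: (i \in T').
have hU : (#|(T :\: T') :|: (T' :\: T)| + #|(T :\: T') :&: (T' :\: T)| = #|T :\: T'| + #|T' :\: T|)%N := cardsUI _ _.
rewrite e0 cards0 cD1 cD2 in hU.
have hD : (#|(T :\: T') :|: (T' :\: T)| <= #|D|)%N := subset_leq_card sub.
lia.
Qed.


Definition T3 := [set T : {set 'I_n} | #|T| == 3%N].
Definition Cc c := [set mkw T c | T in T3].

Lemma wt_supp x : wt x = #|supp x|.
Proof. by []. Qed.

Lemma T3_nonempty : (3 <= n)%N -> exists T, T \in T3.
Proof.
move=> n3; exists [set widen_ord n3 i | i in [set: 'I_3]].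
by rewrite inE card_imset ?cardsT ?card_ord //; by move=> i j /(congr1 val) /= /val_inj.
Qed.

Lemma Cc_code c : (3 <= n)%N -> is_code 4 3 (Cc c).
Proof.
move=> n3; apply/and3P; split.
- have [T TT3] := T3_nonempty n3.
  by apply/set0Pn; exists (mkw T c); apply: imset_f.
- apply/subsetP => x /imsetP [T]; rewrite inE => /eqP h3 ->.
  by rewrite inE wt_supp supp_mkw h3.
- apply/forall_inP => x /imsetP [T]; rewrite inE => /eqP h3 ->.
  apply/forall_inP => y /imsetP [T']; rewrite inE => /eqP h3' ->.
  apply/implyP => ne; apply: mkw_dist => //.
  by apply: contraNneq ne => ->.
Qed.

Lemma code_le (C : {set word g.+1 n}) : is_code 4 3 C -> (#|C| <= #|T3|)%N.
Proof.
case/and3P => _ sub /forall_inP dist.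
have s3 x : x \in C -> #|supp x| = 3%N.
  by move=> xC; move/subsetP: sub => /(_ x xC); rewrite inE wt_supp => /eqP.
have inj : {in C &, injective supp}.
  move=> x y xC yC es; apply/eqP; apply/negPn/negP => ne.
  have := dist x xC => /forall_inP /(_ y yC) /implyP /(_ ne).
  have hsub : [set i | x i != y i] \subset supp x.
    apply/subsetP => i; rewrite inE => ne'; apply/negPn/negP => hx.
    have hy : i \notin supp y by rewrite -es.
    move: hx hy; rewrite !inE !negbK => /eqP hx /eqP hy.
    have exy : x i = y i by apply: val_inj; rewrite hx hy.
    by rewrite exy eqxx in ne'.
  have := subset_leq_card hsub; rewrite /hdist s3 // => h1 h2.
  by have := leq_trans h2 h1.
rewrite -(card_in_imset inj); apply: subset_leq_card.
by apply/subsetP => T /imsetP [x xC ->]; rewrite inE s3.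
Qed.

Lemma card_Cc c : #|Cc c| = #|T3|.
Proof.
rewrite card_in_imset // => T T' TT3 _ /mkw_inj [] //.
by move: TT3; rewrite inE => /eqP.
Qed.

Lemma Aq_eq (c : F * F * F) : (3 <= n)%N -> Aq g.+1 n 4 3 = #|T3|.
Proof.
move=> n3; apply/eqP; rewrite eqn_leq; apply/andP; split.
  by apply/bigmax_leqP => C; apply: code_le.
by rewrite -(card_Cc c) /Aq; apply: leq_bigmax_cond; exact: Cc_code.
Qed.

Lemma cover_ex w : w \in Hqnw g.+1 n 3 -> exists c, w = mkw (supp w) c.
Proof.
rewrite inE -/(wt w) wt_supp => /eqP h3.
set T := supp w.
have [a [b [d [ab ad bd Te]]]] := cards3P h3.
have aT : a \in T by rewrite /T Te !inE eqxx.
have bT : b \in T by rewrite /T Te !inE eqxx orbT.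
have dT : d \in T by rewrite /T Te !inE eqxx !orbT.
have dec i : i \in T -> exists f, enc f = w i by rewrite inE; apply: enc_surj.
have [fa ea] := dec a aT; have [fb eb] := dec b bT; have [fd ed] := dec d dT.
pose phi (c : F * F * F) := (val3 c (lam a), val3 c (lam b), val3 c (lam d)).
have phi_inj : injective phi.
  move=> c c' [e1 e2 e3].
  by apply: (@val3_uniq (lam a) (lam b) (lam d)); rewrite ?(inj_eq lam_inj).
have : (fa - sT T + lam a, fb - sT T + lam b, fd - sT T + lam d) \in codom phi.
  by apply: inj_card_onto.
case/codomP => c [e1 e2 e3]; exists c.
apply/ffunP => i; case iT : (i \in T); last first.
  rewrite mkw_out ?iT //; apply: val_inj => /=.
  by move: iT; rewrite inE => /negbT; rewrite negbK => /eqP.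
rewrite mkw_at //; have : i \in [set a; b; d] by rewrite -Te.
rewrite !inE => /orP [/orP [] | ] /eqP ->.
- by rewrite -e1 -ea; congr enc; ring.
- by rewrite -e2 -eb; congr enc; ring.
- by rewrite -e3 -ed; congr enc; ring.
Qed.

End Construction.


Unset Implicit Arguments.
Theorem theorem4p9 (n g : nat) :
  3 <= n -> prime_power g ->
  (if odd g then n.+1 <= g else n <= g) ->
  TOC_exists g.+1 n 4 3.
Proof.
move=> n3 [p [k [pp [k0 eg]]]] hg.
have ng : n <= g by move: hg; case: (odd g) => // /ltnW.
have [F _ cardF0] := pPrimePowerField pp k0.
have cardF : #|F| = g by rewrite cardF0 eg.
have hn : n <= #|F| by rewrite cardF.
pose lam (i : 'I_n) : F := enum_val (widen_ord hn i).
have lam_inj : injective lam.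
  move=> i j; rewrite /lam => /enum_val_inj /(congr1 val) /= /val_inj; done.
exists [set Cc g lam c | c : F * F * F].
apply/andP; split.
- apply/and3P; split.
  + apply/eqP/setP => w; apply/bigcupP/idP.
      case=> C /imsetP [c _ ->] /imsetP [T TT3 ->].
      by rewrite inE wt_supp supp_mkw; move: TT3; rewrite inE.
    move=> wH; have [c e] := cover_ex cardF lam_inj wH.
    exists (Cc g lam c); first exact: imset_f.
    rewrite e; apply: imset_f; rewrite inE -wt_supp; by move: wH; rewrite inE.
  + apply/trivIsetP => A B /imsetP [c _ ->] /imsetP [c' _ ->] ne.
    rewrite -setI_eq0; apply/eqP/setP => w; rewrite inE in_set0; apply/andP => -[/imsetP [T TT3 ->] /imsetP [T' _ e]].
    move: TT3; rewrite inE => /eqP h3.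
    have [_ cc'] := mkw_inj cardF lam_inj h3 e.
    by rewrite cc' eqxx in ne.
  + apply/imsetP => -[c _ e].
    have [T TT3] := T3_nonempty n3.
    have : mkw g lam T c \in Cc g lam c by apply: imset_f.
    by rewrite -e inE.
- apply/forall_inP => C /imsetP [c _ ->].
  by rewrite /optimal_code Cc_code // (Aq_eq cardF lam_inj c) // (card_Cc cardF lam_inj) eqxx.
Qed.
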